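(* Let $n\in\mathbb N$ and let $A$ be a connected monounary algebra containing an $n$-element cycle. If $A\not\cong\underline n$ and $A^{(\infty)}=A$, then $\mathbf V(A)=\mathbf V(\widehat n)$.
   Context: A monounary algebra is a pair $(A,f)$ with $A$ a nonempty set and $f:A\to A$; direct products are coordinatewise. It is connected if for all $x,y$ there are $m,n\ge0$ with $f^m(x)=f^n(y)$; an $n$-element cycle is a set $\{x,f(x),\dots,f^{n-1}(x)\}$ of $n$ distinct elements with $f^n(x)=x$. A retract of $A$ is a nonempty subalgebra $M$ such that there is an endomorphism $h:A\to M$ with $h|_M=\mathrm{id}$. A retract variety is a class closed under isomorphisms, retracts and direct products; $\mathbf V(\mathcal K)$ is the smallest retract variety containing $\mathcal K$. $A^{(\infty)}$ is the set of $x\in A$ admitting a sequence $x_0=x,x_1,\dots$ in $A$ with $f(x_n)=x_{n-1}$ for all $n\ge1$. $\underline n=(\mathbb Z_n,k\mapsto k+1\bmod n)$; $\widehat n$ has universe $\mathbb Z_n\cup\{(k,1):k\in\mathbb N\}$ with $f(k)=k+1\bmod n$ on $\mathbb Z_n$, $f((k,1))=(k-1,1)$ for $k>1$, $f((1,1))=0$. *)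

(* Defs.v *)
From mathcomp Require Import all_boot.
Set Implicit Arguments. Unset Strict Implicit. Unset Printing Implicit Defensive.

(* Monounary algebras (A, f).  Nonemptiness is imposed where the paper needs
   it: every member of a retract variety is required to be nonempty. *)
Record mua := Mua { car : Type; op : car -> car }.
Arguments op : clear implicits.

Definition hom (A B : mua) (h : car A -> car B) : Prop :=
  forall x, h (op A x) = op B (h x).

Definition iso (A B : mua) : Prop :=
  exists h : car A -> car B, hom h /\ bijective h.

Definition sub_mua (A : mua) (P : car A -> Prop)
  (HP : forall x, P x -> P (op A x)) : mua :=
  @Mua {x : car A | P x} (fun x => exist P (op A (proj1_sig x)) (HP _ (proj2_sig x))).

Definition prod_mua (I : Type) (F : I -> mua) : mua :=
  @Mua (forall i, car (F i)) (fun x i => op (F i) (x i)).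

Definition is_retract (A : mua) (P : car A -> Prop) : Prop :=
  (exists x, P x) /\ (forall x, P x -> P (op A x)) /\
  exists h : car A -> car A, hom (A:=A) (B:=A) h /\ (forall x, P (h x)) /\
                             (forall x, P x -> h x = x).

Definition retract_variety (K : mua -> Prop) : Prop :=
  [/\ forall A, K A -> inhabited (car A),
      forall A B, K A -> iso A B -> K B,
      forall A (P : car A -> Prop) (HP : forall x, P x -> P (op A x)),
        K A -> is_retract P -> K (sub_mua HP)
    & forall (I : Type) (F : I -> mua), (forall i, K (F i)) -> K (prod_mua F)].

Definition V (A : mua) (B : mua) : Prop :=
  forall K, retract_variety K -> K A -> K B.

Definition connected (A : mua) : Prop :=
  forall x y : car A, exists m k, iter m (op A) x = iter k (op A) y.

Definition has_cycle (A : mua) (n : nat) : Prop :=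
  exists x : car A, iter n (op A) x = x /\
    forall i j, i < j -> j < n -> iter i (op A) x <> iter j (op A) x.

Definition inf_part (A : mua) (x : car A) : Prop :=
  exists s : nat -> car A, s 0 = x /\ forall k, op A (s k.+1) = s k.

Definition cyc (n : nat) : mua := @Mua 'I_n (@ordS n).

(* hat n : Z_n plus a ray; inr k stands for (k+1,1) *)
Definition hat_op (n : nat) (Hn : 0 < n) (x : 'I_n + nat) : 'I_n + nat :=
  match x with
  | inl i => inl (ordS i)
  | inr 0 => inl (Ordinal Hn)
  | inr k.+1 => inr k
  end.

Definition hat (n : nat) (Hn : 0 < n) : mua := @Mua ('I_n + nat)%type (hat_op Hn).

(* Main.v *)
Require Import Defs.
From mathcomp Require Import all_boot.
From Stdlib Require Import Classical ClassicalEpsilon FunctionalExtensionality ProofIrrelevance.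
Set Implicit Arguments. Unset Strict Implicit. Unset Printing Implicit Defensive.

Lemma min_ex (P : nat -> Prop) : (exists k, P k) ->
  {k | P k /\ forall j, j < k -> ~ P j}.
Proof.
move=> H; apply: constructive_indefinite_description.
pose Q := fun k => if excluded_middle_informative (P k) then true else false.
have QP k : Q k -> P k by rewrite /Q; case: excluded_middle_informative.
have PQ k : P k -> Q k by rewrite /Q; case: excluded_middle_informative.
have exQ : exists k, Q k by case: H => k /PQ; exists k.
case: (ex_minnP exQ) => m /QP Pm Hm; exists m; split=> // j jm /PQ /Hm.
by rewrite leqNgt jm.
Qed.

Lemma min_uniq (P : nat -> Prop) k k' : P k -> (forall j, j < k -> ~ P j) ->
  P k' -> (forall j, j < k' -> ~ P j) -> k = k'.
Proof.
move=> Pk Hk Pk' Hk'; case: (ltngtP k k') => // h.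
  by case: (Hk' _ h).
by case: (Hk _ h).
Qed.

Definition inv_on (X Y : Type) (e : X -> Y) (x0 : X) (y : Y) : X :=
  match excluded_middle_informative (exists x, y = e x) with
  | left H => proj1_sig (constructive_indefinite_description _ H)
  | right _ => x0 end.

Lemma inv_onE X Y (e : X -> Y) x0 y : (exists x, y = e x) -> e (inv_on e x0 y) = y.
Proof.
rewrite /inv_on; case: excluded_middle_informative => // H _.
by case: constructive_indefinite_description => x /= ->.
Qed.

Lemma inv_on_inj X Y (e : X -> Y) x0 x : injective e -> inv_on e x0 (e x) = x.
Proof. move=> ie; apply: ie; apply: inv_onE; by exists x. Qed.

Definition ext_map (B A : mua) (S : car B -> Prop) (q : car B -> car A)
  (pre : car A -> car A) (g : car B -> car A) (b : car B) : car A :=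
  match excluded_middle_informative (exists k, S (iter k (op B) b)) with
  | left H => let k := proj1_sig (min_ex H) in iter k pre (q (iter k (op B) b))
  | right _ => g b end.

Lemma ext_val B A S q pre g b k :
  S (iter k (op B) b) -> (forall j, j < k -> ~ S (iter j (op B) b)) ->
  @ext_map B A S q pre g b = iter k pre (q (iter k (op B) b)).
Proof.
move=> Sk Hk; rewrite /ext_map; case: excluded_middle_informative => [H|H]; last first.
  by case: H; exists k.
case: (min_ex H) => k' [Sk' Hk'] /=.
by rewrite (min_uniq Sk' Hk' Sk Hk).
Qed.

Lemma ext_none B A S q pre g b :
  (forall k, ~ S (iter k (op B) b)) -> @ext_map B A S q pre g b = g b.
Proof.
move=> H; rewrite /ext_map; case: excluded_middle_informative => // [[k]].
by move=> Sk; case: (H k Sk).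
Qed.

Lemma ext_hom (B A : mua) (S : car B -> Prop) (q : car B -> car A)
  (pre : car A -> car A) (g : car B -> car A) (T : car A -> Prop) :
  (forall b, S b -> S (op B b)) ->
  (forall b, S b -> q (op B b) = op A (q b)) ->
  (forall b, S b -> T (q b)) -> (forall y, T y -> T (pre y)) ->
  (forall y, T y -> op A (pre y) = y) ->
  (forall b, (forall k, ~ S (iter k (op B) b)) -> g (op B b) = op A (g b)) ->
  hom (ext_map S q pre g).
Proof.
move=> HS Hq HT Hpre Hpre' Hg b.
case: (excluded_middle_informative (exists k, S (iter k (op B) b))) => [H|H].
  case: (min_ex H) => k [Sk Hk].
  rewrite (@ext_val _ _ _ q pre g _ _ Sk Hk).
  case: k Sk Hk => [|k] Sk Hk.
    have Sb : S (iter 0 (op B) (op B b)) by apply: HS.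
    by rewrite (@ext_val _ _ _ q pre g _ 0 Sb) //= Hq.
  have Sk' : S (iter k (op B) (op B b)) by rewrite -iterSr.
  have Hk' : forall j, j < k -> ~ S (iter j (op B) (op B b)).
    by move=> j jk; rewrite -iterSr; apply: Hk.
  rewrite (@ext_val _ _ _ q pre g _ _ Sk' Hk') iterS Hpre' -?iterSr //.
  have : T (q (iter k.+1 (op B) b)) by apply: HT.
  elim: k {Sk Hk Sk' Hk'} (q _) => //= k IH y Ty; exact/Hpre/IH.
have H' : forall k, ~ S (iter k (op B) b) by move=> k Sk; apply: H; exists k.
have H'' : forall k, ~ S (iter k (op B) (op B b)).
  by move=> k; rewrite -iterSr; apply: H'.
by rewrite !ext_none // Hg.
Qed.

Lemma retract_K K (A B : mua) (e : car B -> car A) (p : car A -> car B) :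
  retract_variety K -> K A -> hom e -> hom p -> (forall x, p (e x) = x) -> K B.
Proof.
case=> Hne Hiso Hret _ KA he hp pe.
pose P := fun y => exists x, y = e x.
have HP : forall y, P y -> P (op A y).
  by move=> y [x ->]; exists (op B x); rewrite he.
have Ksub : K (sub_mua HP).
  apply: Hret => //; split; first by case: (Hne _ KA) => a; exists (e (p a)); exists (p a).
  split=> //; exists (fun y => e (p y)); split.
    by move=> y; rewrite hp he.
  split; first by move=> y; exists (p y).
  by move=> y [x ->]; rewrite pe.
apply: (Hiso _ _ Ksub); exists (fun y => p (proj1_sig y)); split.
  by move=> [y Py] /=; rewrite hp.
exists (fun x => exist P (e x) (ex_intro _ x erefl)).
  move=> [y Py] /=; apply: eq_sig_hprop => /=; first by move=> *; apply: proof_irrelevance.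
  by case: Py => x ->; rewrite pe.
by move=> x /=; rewrite pe.
Qed.

Lemma key K (Big Small : mua) (e : car Small -> car Big) (x0 : car Small)
  (pre : car Small -> car Small) (g : car Big -> car Small) :
  retract_variety K -> K Big -> hom e -> injective e ->
  (forall y, op Small (pre y) = y) ->
  (forall b, (forall k, ~ exists z, iter k (op Big) b = e z) -> g (op Big b) = op Small (g b)) ->
  K Small.
Proof.
move=> RK KB he ie Hpre Hg.
pose S := fun b => exists z, b = e z.
pose p := ext_map S (inv_on e x0) pre g.
apply: (@retract_K K Big Small e p) => //.
  apply: (@ext_hom _ _ S _ pre g (fun _ => True)).
  - by move=> b [z ->]; exists (op Small z); rewrite he.
  - by move=> b [z ->]; rewrite -he !inv_on_inj.
  - by [].
  - by [].
  - by move=> y _; apply: Hpre.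
  - move=> b Hb; apply: Hg => k [z Hz]; apply: (Hb k); exists z; exact: Hz.
move=> x; rewrite /p (@ext_val _ _ _ _ _ _ _ 0) //=.
  by rewrite inv_on_inj.
by exists x.
Qed.

Lemma iter_fixp (T : Type) (h : T -> T) p a m : iter p h a = a -> iter (m * p) h a = a.
Proof. by move=> H; elim: m => //= m IH; rewrite mulSn iterD IH H. Qed.

Lemma iter_mod (T : Type) (h : T -> T) n a m : iter n h a = a -> iter m h a = iter (m %% n) h a.
Proof.
move=> H; rewrite {1}(divn_eq m n) addnC iterD.
by rewrite (@iter_fixp _ _ n a (m %/ n)).
Qed.

Lemma hom_iter (X Y : mua) (h : car X -> car Y) m x :
  hom h -> h (iter m (op X) x) = iter m (op Y) (h x).
Proof. by move=> hh; elim: m => //= m IH; rewrite hh IH. Qed.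

Lemma val_iterS n (j : 'I_n) m : val (iter m (@ordS n) j) = (j + m) %% n.
Proof.
elim: m => [|m IH] /=; first by rewrite addn0 modn_small.
by rewrite IH -addn1 modnDml addn1 addnS.
Qed.

Lemma modS m d : (m %% d).+1 %% d = m.+1 %% d.
Proof. by rewrite -addn1 modnDml addn1. Qed.

Section Cyc.
Variables (A : mua) (n : nat) (Hn : 0 < n) (xc : car A).
Hypothesis Hxc : iter n (op A) xc = xc.
Hypothesis Hdist : forall i j, i < j -> j < n -> iter i (op A) xc <> iter j (op A) xc.
Hypothesis Hconn : connected A.

Local Notation f := (op A).
Definition inC y := exists j, y = iter j f xc.

Lemma inC_n y : inC y -> iter n f y = y.
Proof. by case=> j ->; rewrite -iterD addnC iterD Hxc. Qed.

Lemma inC_iter k y : inC y -> inC (iter k f y).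
Proof. by case=> j ->; exists (k + j); rewrite iterD. Qed.

Lemma cyc_eq j j' : iter j f xc = iter j' f xc -> j %% n = j' %% n.
Proof.
rewrite (iter_mod j Hxc) (iter_mod j' Hxc).
have := ltn_pmod j Hn; have := ltn_pmod j' Hn.
case: (ltngtP (j %% n) (j' %% n)) => // h h1 h2 E.
  by case: (Hdist h h1).
by case: (Hdist h h2).
Qed.

Lemma periodic_inC a p : 0 < p -> iter p f a = a -> inC a.
Proof.
move=> p0 Hp; case: (Hconn a xc) => u [v Huv].
have E : a = iter (u * p) f a by rewrite iter_fixp.
have le : u <= u * p by rewrite leq_pmulr.
rewrite E -(subnK le) iterD Huv -iterD; by exists (u * p - u + v).
Qed.

Definition cidx y := inv_on (fun j => iter j f xc) 0 y.
Lemma cidxE y : inC y -> iter (cidx y) f xc = y.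
Proof. by move=> H; apply: inv_onE. Qed.

Definition o0 : 'I_n := Ordinal Hn.
Definition qC y := iter (cidx y) (@ordS n) o0.

Lemma val_qC y : val (qC y) = cidx y %% n.
Proof. by rewrite val_iterS. Qed.

Lemma qC_hom y : inC y -> qC (f y) = ordS (qC y).
Proof.
move=> Cy; apply: val_inj; rewrite /= !val_qC.
have Cfy : inC (f y) by apply: (inC_iter 1).
have : iter (cidx (f y)) f xc = iter (cidx y).+1 f xc by rewrite cidxE // iterS cidxE.
by move/cyc_eq => ->; rewrite modS.
Qed.

Lemma not_all_C : ~ iso A (cyc n) -> ~ (forall y, inC y).
Proof.
move=> NI allC; apply: NI; exists qC; split; first by move=> y; apply: qC_hom.
exists (fun j : 'I_n => iter j f xc).
  move=> y /=; rewrite val_qC -iter_mod //; exact: cidxE.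
move=> j /=; apply: val_inj; rewrite /= val_qC.
have Cj : inC (iter j f xc) by exists j.
have := cidxE Cj; move/cyc_eq => ->; by rewrite modn_small.
Qed.

Definition preC (j : 'I_n) := iter n.-1 (@ordS n) j.
Lemma preCK j : ordS (preC j) = j.
Proof.
apply: val_inj; rewrite /preC -iterS prednK // val_iterS.
by rewrite modnDr modn_small.
Qed.

Definition phi := ext_map (B := A) (A := cyc n) inC qC preC (fun _ => o0).

Lemma reachC b : ~ (forall k, ~ inC (iter k f b)).
Proof.
move=> H; case: (Hconn b xc) => u [v Huv]; apply: (H u); rewrite Huv; by exists v.
Qed.

Lemma phi_hom : hom phi.
Proof.
apply: (@ext_hom _ _ _ _ _ _ (fun _ => True)) => //.
- by move=> b Cb; apply: (inC_iter 1).
- by move=> b Cb; rewrite qC_hom.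
- by move=> y _; apply: preCK.
- by move=> b /reachC.
Qed.

Definition hat_pre (z : 'I_n + nat) : 'I_n + nat :=
  match z with
  | inl j => if j == o0 then inr 0 else inl (preC j)
  | inr k => inr k.+1 end.

Lemma hat_preK z : hat_op Hn (hat_pre z) = z.
Proof.
case: z => [j|k] //=; case: eqP => [->|_] //=; by rewrite preCK.
Qed.

Lemma hat_pre_iter k : iter k.+1 hat_pre (inl o0) = inr k.
Proof.
elim: k => [|k IH]; first by rewrite /= /hat_pre; idtac.
by rewrite iterS IH.
Qed.

Definition Down i y := exists m, y = iter m f i.
Definition qD s y : car (hat Hn) := inl (iter s (@ordS n) (phi y)).
Definition gD i s := ext_map (B := A) (A := hat Hn) (Down i) (qD s) hat_pre (fun _ => inl o0).

Lemma reachD i b : ~ (forall k, ~ Down i (iter k f b)).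
Proof.
move=> H; case: (Hconn b i) => u [v Huv]; apply: (H u); rewrite Huv; by exists v.
Qed.

Lemma gD_hom i s : hom (gD i s).
Proof.
apply: (@ext_hom _ _ _ _ _ _ (fun _ => True)) => //.
- by move=> b [m ->]; exists m.+1.
- by move=> b _; rewrite /qD phi_hom /= -iterS iterSr.
- by move=> y _; apply: hat_preK.
- by move=> b /reachD.
Qed.

Lemma gD_self i s : gD i s i = qD s i.
Proof. by rewrite /gD (@ext_val _ _ _ _ _ _ _ 0) //; exists 0. Qed.

Lemma sep1 a b : (forall s, gD a s a = gD a s b) -> exists m, b = iter m f a.
Proof.
move=> H.
have ex : exists k, Down a (iter k f b).
  by case: (Hconn b a) => u [v Huv]; exists u; rewrite Huv; exists v.
case: (min_ex ex) => [[|k] [Dk Hk]]; first by case: Dk => m /= ->; exists m.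
pose x := phi (iter k.+1 f b).
have Hs : iter (n - x) (@ordS n) x = o0.
  by apply: val_inj; rewrite /= val_iterS subnKC ?modnn // ltnW.
have := H (n - x).
rewrite gD_self /gD (@ext_val _ _ _ _ _ _ _ _ Dk Hk) /qD -/x Hs hat_pre_iter.
by [].
Qed.

Lemma sep a b : (forall i s, gD i s a = gD i s b) -> a = b.
Proof.
move=> H.
case: (sep1 (fun s => H a s)) => m Em.
case: (@sep1 b a (fun s => esym (H b s))) => m' Em'.
case: m Em => [|m] Em; first by [].
have Ca : inC a.
  apply: (@periodic_inC a (m' + m.+1)) => //.
    by rewrite addnS.
  by rewrite iterD -Em -Em'.
have := H a 0; rewrite gD_self /gD (@ext_val _ _ _ _ _ _ _ 0); last first.
- by move=> j.
- by exists m.+1.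
rewrite /qD /= Em (hom_iter _ _ phi_hom) => [[]] /(congr1 val).
change (op (cyc n)) with (@ordS n).
rewrite -iterS val_iterS => E.
have : (val (phi a) + 0 == val (phi a) + m.+1 %[mod n]).
  by rewrite addn0 (modn_small (ltn_ord (phi a))) -E.
rewrite eqn_modDl mod0n => /eqP Hm.
by rewrite (iter_mod m.+1 (inC_n Ca)) -Hm.
Qed.


Lemma exists_x : ~ iso A (cyc n) -> exists x, ~ inC x /\ inC (f x).
Proof.
move=> NI.
have [y Ny] : exists y, ~ inC y.
  apply: NNPP => H; apply: (not_all_C NI) => y; apply: NNPP => Hy; apply: H; by exists y.
have ex : exists k, inC (iter k f y).
  by case: (Hconn y xc) => u [v Huv]; exists u; rewrite Huv; exists v.
case: (min_ex ex) => [[|k] [Ck Hk]]; first by [].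
exists (iter k f y); split; first by apply: Hk.
by rewrite -iterS.
Qed.

Section Emb.
Variables (x : car A) (s : nat -> car A).
Hypothesis Hx : ~ inC x.
Hypothesis Hfx : inC (f x).
Hypothesis Hs0 : s 0 = x.
Hypothesis Hs : forall k, f (s k.+1) = s k.

Definition emb (z : car (hat Hn)) : car A :=
  match z with inl j => iter j f (f x) | inr k => s k end.

Lemma emb_hom : hom emb.
Proof.
case=> [j|[|k]] /=.
- rewrite -iterS (iter_mod j.+1 (inC_n Hfx)); by [].
- by rewrite Hs0.
- by rewrite Hs.
Qed.

Lemma s_back k d : iter k f (s (k + d)) = s d.
Proof. by elim: k => //= k IH; rewrite -iterS iterSr addSn Hs IH. Qed.

Lemma s_notC k : ~ inC (s k).
Proof.
move=> C; apply: Hx; rewrite -Hs0 -(s_back k 0) addn0; exact: inC_iter.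
Qed.

Lemma emb_inj : injective emb.
Proof.
case=> [j|k] [j'|k'] /=.
- case: Hfx => t Et; rewrite Et -!iterD => /cyc_eq /eqP; rewrite eqn_modDr.
  rewrite !modn_small // => /eqP E; congr inl; exact: val_inj.
- move=> E; case: (@s_notC k'); rewrite -E; exact: inC_iter.
- move=> E; case: (@s_notC k); rewrite E; exact: inC_iter.
- wlog lt : k k' / k < k'.
    move=> W E; case: (ltngtP k k') => h; first exact: W.
      by rewrite (W k' k h (esym E)).
    by rewrite h.
  move=> E; exfalso; apply: Hx.
  have E1 : x = s (k' - k).
    rewrite -Hs0 -(s_back k 0) addn0 E; have {1}->: k' = k + (k' - k) by rewrite subnKC // ltnW.
    by rewrite s_back.
  apply: (@periodic_inC x (k' - k)); first by rewrite subn_gt0.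
  by have := s_back (k' - k) 0; rewrite addn0 Hs0 -E1.
Qed.
End Emb.

End Cyc.

Unset Implicit Arguments.

Theorem lemma4p2 (n : nat) (Hn : 0 < n) (A : mua) :
  inhabited (car A) -> connected A -> has_cycle A n ->
  ~ iso A (cyc n) -> (forall x : car A, inf_part x) ->
  forall B : mua, V A B <-> V (hat Hn) B.
Proof.
move=> [a0] Hconn [xc [Hxc Hdist]] NI Hinf.
case: (exists_x Hn Hxc Hdist Hconn NI) => x [Hx Hfx].
case: (Hinf x) => s [Hs0 Hs].
have H1 : forall K, retract_variety K -> K A -> K (hat Hn).
  move=> K RK KA.
  apply: (@key K A (hat Hn) (emb x s) (inl (o0 Hn)) (hat_pre Hn) (fun _ => inl (o0 Hn))) => //.
  - exact: (emb_hom Hxc).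
  - exact: (emb_inj Hxc Hdist Hconn Hx Hfx Hs0 Hs).
  - exact: hat_preK.
  - move=> b Hb; exfalso; case: (Hconn b (op A x)) => u [v Huv].
    apply: (Hb u); rewrite Huv.
    have Cfx := Hfx.
    case: Hfx => t Et.
    exists (inl (Ordinal (ltn_pmod v Hn))) => /=.
    rewrite (iter_mod v (inC_n Hxc Cfx)); by [].
pose preA := fun y => proj1_sig (constructive_indefinite_description _ (Hinf y)) 1.
have HpreA : forall y, op A (preA y) = y.
  move=> y; rewrite /preA; case: constructive_indefinite_description => t [t0 ht] /=.
  by rewrite ht t0.
have H2 : forall K, retract_variety K -> K (hat Hn) -> K A.
  move=> K RK KH.
  pose I := (car A * nat)%type.
  have KP : K (prod_mua (fun _ : I => hat Hn)).
    by case: RK => _ _ _ Hp; apply: Hp.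
  apply: (@key K (prod_mua (fun _ : I => hat Hn)) A (fun y (i : I) => gD Hn xc i.1 i.2 y) a0 preA
            (fun t => emb x s (t (a0, 0)))) => //.
  - move=> y; apply: functional_extensionality => i /=.
    exact: (gD_hom Hn Hxc Hdist Hconn).
  - move=> y1 y2 E; apply: (sep Hxc Hdist Hconn) => i k.
    exact: (congr1 (fun t => t (i, k)) E).
  - move=> b _ /=; exact: (emb_hom Hxc).
move=> B; split=> HB K RK Kx.
  by apply: HB => //; apply: H2.
by apply: HB => //; apply: H1.
Qed.
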